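(* Let $\eta:\mathrm{STVB}_2\to M_3(\mathbb{C})$ be a complex homogeneous local representation of $\mathrm{STVB}_2$. Then $\eta$ is equivalent to one of the following thirteen representations $\eta_i$, described by $2\times2$ matrices $S,R,T,G$ with $\eta_i(\sigma_1)=S\oplus 1$, $\eta_i(\sigma_1^{-1})=S^{-1}\oplus 1$, $\eta_i(\rho_1)=R\oplus 1$, $\eta_i(\tau_1)=T\oplus 1$, $\eta_i(\gamma_1)=G\oplus 1$, $\eta_i(\gamma_2)=1\oplus G$ (all parameters complex): \begin{itemize} \item[(1)] $S=\begin{pmatrix}a&b\\ \frac{b}{x^2}&a\end{pmatrix}$, $R=\begin{pmatrix}0&x\\ \frac1x&0\end{pmatrix}$, $T=\begin{pmatrix}f&g\\ \frac{g}{x^2}&f\end{pmatrix}$, $G=\mathrm{diag}(-1,1)$; $a^2x^2-b^2\neq0$, $x\neq0$. \item[(2)] $S=\begin{pmatrix}a&b\\ \frac{b-bz^2}{x^2}&\frac{ax+2bz}{x}\end{pmatrix}$, $R=\begin{pmatrix}-z&x\\ \frac{1-z^2}{x}&z\end{pmatrix}$, $T=\begin{pmatrix}f&g\\ \frac{g-gz^2}{x^2}&\frac{fx+2gz}{x}\end{pmatrix}$, $G=I_2$; $a^2x^2+2abxz-b^2+b^2z^2\neq0$, $x\neq0$. \item[(3)] $S=\begin{pmatrix}a&b\\ c&d\end{pmatrix}$, $R=-I_2$, $T=\begin{pmatrix}f&g\\ \frac{cg}{b}&\frac{bf-ag+dg}{b}\end{pmatrix}$, $G=I_2$; $ad-bc\neq0$,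 $b\neq0$. \item[(4)] $S=\begin{pmatrix}a&b\\ c&d\end{pmatrix}$, $R=I_2$, $T=\begin{pmatrix}f&g\\ \frac{cg}{b}&\frac{bf-ag+dg}{b}\end{pmatrix}$, $G=I_2$; $ad-bc\neq0$, $b\neq0$. \item[(5)] $S=aI_2$, $R=-I_2$, $T=\begin{pmatrix}f&g\\ h&k\end{pmatrix}$, $G=I_2$; $a\neq0$. \item[(6)] $S=\begin{pmatrix}a&0\\ c&d\end{pmatrix}$, $R=-I_2$, $T=\begin{pmatrix}f&0\\ h&\frac{cf-ah+dh}{c}\end{pmatrix}$, $G=I_2$; $ad\neq0$, $c\neq0$. \item[(7)] $S=\begin{pmatrix}a&0\\ c&\frac{-2c+ay}{y}\end{pmatrix}$, $R=\begin{pmatrix}1&0\\ y&-1\end{pmatrix}$, $T=\begin{pmatrix}f&0\\ h&\frac{-2h+fy}{y}\end{pmatrix}$, $G=I_2$; $a(-2c+ay)\neq0$, $y\neq0$. \item[(8)] $S=\begin{pmatrix}a&0\\ c&\frac{2c+ay}{y}\end{pmatrix}$, $R=\begin{pmatrix}-1&0\\ y&1\end{pmatrix}$, $T=\begin{pmatrix}f&0\\ h&\frac{2h+fy}{y}\end{pmatrix}$, $G=I_2$; $a(2c+ay)\neq0$, $y\neq0$. \item[(9)] $S=aI_2$, $R=I_2$, $T=\begin{pmatrix}f&g\\ h&k\end{pmatrix}$, $G=I_2$; $a\neq0$. \item[(10)] $S=\begin{pmatrix}a&0\\ c&d\end{pmatrix}$, $R=I_2$, $T=\begin{pmatrix}f&0\\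 h&\frac{cf-ah+dh}{c}\end{pmatrix}$, $G=I_2$; $ad\neq0$, $c\neq0$. \item[(11)] $S=\mathrm{diag}(a,d)$, $R=\mathrm{diag}(1,-1)$, $T=\mathrm{diag}(f,k)$, $G=I_2$; $ad\neq0$. \item[(12)] $S=\mathrm{diag}(a,d)$, $R=\mathrm{diag}(-1,1)$, $T=\mathrm{diag}(f,k)$, $G=I_2$; $ad\neq0$. \item[(13)] $S=\mathrm{diag}(a,d)$, $R=I_2$, $T=\mathrm{diag}(f,k)$, $G=I_2$; $ad\neq0$. \end{itemize} In addition, if $\eta(\tau_1)$ is invertible, then $\eta$ becomes a representation of $\mathrm{STVG}_2$ (sending $\bar\tau_1$ to $\eta(\tau_1)^{-1}$).
   Context: The singular twisted virtual braid monoid $\mathrm{STVB}_2$ is the monoid generated by $\sigma_1,\sigma_1^{-1},\rho_1,\tau_1,\gamma_1,\gamma_2$ with defining relations $\sigma_1\sigma_1^{-1}=\sigma_1^{-1}\sigma_1=1$, $\rho_1^2=1$, $\gamma_1^2=\gamma_2^2=1$, $\gamma_1\gamma_2=\gamma_2\gamma_1$, $\rho_1\gamma_1=\gamma_2\rho_1$, $\rho_1\sigma_1\rho_1=\gamma_2\gamma_1\sigma_1\gamma_1\gamma_2$, $\sigma_1\tau_1=\tau_1\sigma_1$, $\rho_1\tau_1\rho_1=\gamma_2\gamma_1\tau_1\gamma_1\gamma_2$. The singular twisted virtual braid group $\mathrm{STVG}_2$ is the group with generators $\sigma_1,\rho_1,\tau_1,\bar\tau_1,\gamma_1,\gamma_2$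 satisfying all relations of $\mathrm{STVB}_2$, the same relations with $\bar\tau_1$ in place of $\tau_1$, and $\tau_1\bar\tau_1=\bar\tau_1\tau_1=1$. For a $2\times2$ matrix $M$, $M\oplus1=\begin{pmatrix}M&0\\0&1\end{pmatrix}$ and $1\oplus M=\begin{pmatrix}1&0\\0&M\end{pmatrix}$. A complex local representation $\eta:\mathrm{STVB}_2\to M_3(\mathbb{C})$ is a monoid homomorphism with $\eta(\sigma_1)=S\oplus1$, $\eta(\rho_1)=R\oplus1$, $\eta(\tau_1)=T\oplus1$, $\eta(\gamma_1)=G_1\oplus1$, $\eta(\gamma_2)=1\oplus G_2$, where $S,R,G_1,G_2\in\mathrm{GL}_2(\mathbb{C})$ and $T\in M_2(\mathbb{C})$; it is homogeneous if $G_1=G_2$. Two representations are equivalent if they are conjugate by a fixed invertible matrix. *)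

(* Defs.v *)
From HB Require Import structures.
From mathcomp Require Import all_boot all_algebra complex reals.
Set Implicit Arguments. Unset Strict Implicit. Unset Printing Implicit Defensive.
Import GRing.Theory.
Local Open Scope ring_scope.

Section Defs.
Variable R : realType.
Local Notation C := (R[i])%type.

Definition mx2 (a b c d : C) : 'M[C]_2 :=
  \matrix_(i < 2, j < 2)
    if (i == 0 :> nat) then (if (j == 0 :> nat) then a else b)
    else (if (j == 0 :> nat) then c else d).

Definition diag2 (a d : C) : 'M[C]_2 := mx2 a 0 0 d.

Definition dsumR (M : 'M[C]_2) : 'M[C]_3 := block_mx M 0 0 (1%:M : 'M[C]_1).
Definition dsumL (M : 'M[C]_2) : 'M[C]_3 := block_mx (1%:M : 'M[C]_1) 0 0 M.

Inductive stvb_gen := sig1 | sig1inv | rho1 | tau1 | gam1 | gam2.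

(* A monoid homomorphism STVB_2 -> M_3(C) is the same as an assignment of
   matrices to the generators satisfying the defining relations. *)
Definition stvb_rep (eta : stvb_gen -> 'M[C]_3) : Prop :=
  [/\ eta sig1 *m eta sig1inv = 1%:M,
      eta sig1inv *m eta sig1 = 1%:M,
      eta rho1 *m eta rho1 = 1%:M,
      eta gam1 *m eta gam1 = 1%:M &
      eta gam2 *m eta gam2 = 1%:M] /\
  [/\ eta gam1 *m eta gam2 = eta gam2 *m eta gam1,
      eta rho1 *m eta gam1 = eta gam2 *m eta rho1,
      eta rho1 *m eta sig1 *m eta rho1
        = eta gam2 *m eta gam1 *m eta sig1 *m eta gam1 *m eta gam2,
      eta sig1 *m eta tau1 = eta tau1 *m eta sig1 &
      eta rho1 *m eta tau1 *m eta rho1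
        = eta gam2 *m eta gam1 *m eta tau1 *m eta gam1 *m eta gam2].

Definition local_rep_with (eta : stvb_gen -> 'M[C]_3)
    (S Rm T G1 G2 : 'M[C]_2) : Prop :=
  [/\ stvb_rep eta,
      [/\ S \in unitmx, Rm \in unitmx, G1 \in unitmx & G2 \in unitmx],
      eta sig1 = dsumR S, eta rho1 = dsumR Rm &
      [/\ eta tau1 = dsumR T, eta gam1 = dsumR G1 & eta gam2 = dsumL G2]].

Definition local_rep (eta : stvb_gen -> 'M[C]_3) : Prop :=
  exists S Rm T G1 G2, local_rep_with eta S Rm T G1 G2.

Definition homogeneous_local_rep (eta : stvb_gen -> 'M[C]_3) : Prop :=
  exists S Rm T G, local_rep_with eta S Rm T G G.

Definition rep_equiv (eta eta' : stvb_gen -> 'M[C]_3) : Prop :=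
  exists P : 'M[C]_3, P \in unitmx /\
    forall g, eta g = P *m eta' g *m invmx P.

Definition eta_of (S Rm T G : 'M[C]_2) : stvb_gen -> 'M[C]_3 :=
  fun g => match g with
  | sig1 => dsumR S
  | sig1inv => dsumR (invmx S)
  | rho1 => dsumR Rm
  | tau1 => dsumR T
  | gam1 => dsumR G
  | gam2 => dsumL G
  end.

Definition I2 : 'M[C]_2 := 1%:M.

Definition thirteen_families (eta : stvb_gen -> 'M[C]_3) : Prop :=
      (exists a b f g x : C,
        [/\ a ^+ 2 * x ^+ 2 - b ^+ 2 != 0, x != 0 &
          rep_equiv eta (eta_of (mx2 a b (b / x ^+ 2) a) (mx2 0 x (1 / x) 0)
                                (mx2 f g (g / x ^+ 2) f) (diag2 (-1) 1))]) \/
      (exists a b f g x z : C,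
        [/\ a ^+ 2 * x ^+ 2 + 2 * a * b * x * z - b ^+ 2 + b ^+ 2 * z ^+ 2 != 0,
            x != 0 &
          rep_equiv eta
            (eta_of (mx2 a b ((b - b * z ^+ 2) / x ^+ 2) ((a * x + 2 * b * z) / x))
                    (mx2 (- z) x ((1 - z ^+ 2) / x) z)
                    (mx2 f g ((g - g * z ^+ 2) / x ^+ 2) ((f * x + 2 * g * z) / x))
                    I2)]) \/
      (exists a b c d f g : C,
        [/\ a * d - b * c != 0, b != 0 &
          rep_equiv eta (eta_of (mx2 a b c d) (- I2)
                   (mx2 f g (c * g / b) ((b * f - a * g + d * g) / b)) I2)]) \/
      (exists a b c d f g : C,
        [/\ a * d - b * c != 0, b != 0 &
          rep_equiv eta (eta_of (mx2 a b c d) I2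
                   (mx2 f g (c * g / b) ((b * f - a * g + d * g) / b)) I2)]) \/
      (exists a f g h k : C,
        a != 0 /\ rep_equiv eta (eta_of (a%:M) (- I2) (mx2 f g h k) I2)) \/
      (exists a c d f h : C,
        [/\ a * d != 0, c != 0 &
          rep_equiv eta (eta_of (mx2 a 0 c d) (- I2)
                   (mx2 f 0 h ((c * f - a * h + d * h) / c)) I2)]) \/
      (exists a c f h y : C,
        [/\ a * (- 2 * c + a * y) != 0, y != 0 &
          rep_equiv eta (eta_of (mx2 a 0 c ((- 2 * c + a * y) / y)) (mx2 1 0 y (-1))
                   (mx2 f 0 h ((- 2 * h + f * y) / y)) I2)]) \/
      (exists a c f h y : C,
        [/\ a * (2 * c + a * y) != 0, y != 0 &
          rep_equiv eta (eta_of (mx2 a 0 c ((2 * c + a * y) / y)) (mx2 (-1) 0 y 1)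
                   (mx2 f 0 h ((2 * h + f * y) / y)) I2)]) \/
      (exists a f g h k : C,
        a != 0 /\ rep_equiv eta (eta_of (a%:M) I2 (mx2 f g h k) I2)) \/
      (exists a c d f h : C,
        [/\ a * d != 0, c != 0 &
          rep_equiv eta (eta_of (mx2 a 0 c d) I2
                   (mx2 f 0 h ((c * f - a * h + d * h) / c)) I2)]) \/
      (exists a d f k : C,
        a * d != 0 /\
          rep_equiv eta (eta_of (diag2 a d) (diag2 1 (-1)) (diag2 f k) I2)) \/
      (exists a d f k : C,
        a * d != 0 /\
          rep_equiv eta (eta_of (diag2 a d) (diag2 (-1) 1) (diag2 f k) I2)) \/
      (exists a d f k : C,
        a * d != 0 /\
          rep_equiv eta (eta_of (diag2 a d) I2 (diag2 f k) I2)).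

Inductive stvg_gen := gsig1 | grho1 | gtau1 | gtaubar1 | ggam1 | ggam2.

(* A group homomorphism STVG_2 -> GL_3(C): invertible images of the
   generators satisfying the defining relations (sigma1^{-1} is the group
   inverse, so the relations sigma1 sigma1^{-1} = 1 are automatic). *)
Definition stvg_rep (eta : stvg_gen -> 'M[C]_3) : Prop :=
  [/\ forall g, eta g \in unitmx,
      [/\ eta grho1 *m eta grho1 = 1%:M,
          eta ggam1 *m eta ggam1 = 1%:M,
          eta ggam2 *m eta ggam2 = 1%:M,
          eta ggam1 *m eta ggam2 = eta ggam2 *m eta ggam1 &
          eta grho1 *m eta ggam1 = eta ggam2 *m eta grho1],
      eta grho1 *m eta gsig1 *m eta grho1
        = eta ggam2 *m eta ggam1 *m eta gsig1 *m eta ggam1 *m eta ggam2,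
      [/\ eta gsig1 *m eta gtau1 = eta gtau1 *m eta gsig1,
          eta grho1 *m eta gtau1 *m eta grho1
            = eta ggam2 *m eta ggam1 *m eta gtau1 *m eta ggam1 *m eta ggam2,
          eta gsig1 *m eta gtaubar1 = eta gtaubar1 *m eta gsig1 &
          eta grho1 *m eta gtaubar1 *m eta grho1
            = eta ggam2 *m eta ggam1 *m eta gtaubar1 *m eta ggam1 *m eta ggam2] &
      eta gtau1 *m eta gtaubar1 = 1%:M /\ eta gtaubar1 *m eta gtau1 = 1%:M].

Definition extend_to_stvg (eta : stvb_gen -> 'M[C]_3) : stvg_gen -> 'M[C]_3 :=
  fun g => match g with
  | gsig1 => eta sig1
  | grho1 => eta rho1
  | gtau1 => eta tau1
  | gtaubar1 => invmx (eta tau1)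
  | ggam1 => eta gam1
  | ggam2 => eta gam2
  end.

End Defs.

(* Main.v *)
Require Import Defs.
From mathcomp Require Import all_boot all_algebra complex reals.
From mathcomp Require Import ring.
Set Implicit Arguments. Unset Strict Implicit. Unset Printing Implicit Defensive.
Import GRing.Theory.
Local Open Scope ring_scope.

Section H.
Variable R : realType.
Local Notation C := (R[i])%type.

Lemma mx2E (M : 'M[C]_2) : M = mx2 (M 0 0) (M 0 1) (M 1 0) (M 1 1).
Proof.
apply/matrixP => i j; rewrite mxE.
by case: i => [[|[|i]] Hi]; case: j => [[|[|j]] Hj] //=;
  congr (M _ _); apply/val_inj.
Qed.

Lemma mx2_mul (a b c d a' b' c' d' : C) :
  mx2 a b c d *m mx2 a' b' c' d' =
  mx2 (a*a'+b*c') (a*b'+b*d') (c*a'+d*c') (c*b'+d*d').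
Proof.
apply/matrixP => i j; rewrite !mxE !big_ord_recr big_ord0 /= !mxE /= add0r.
by case: i => [[|[|i]] Hi]; case: j => [[|[|j]] Hj].
Qed.

Lemma mx2_inj (a b c d a' b' c' d' : C) :
  mx2 a b c d = mx2 a' b' c' d' -> [/\ a = a', b = b', c = c' & d = d'].
Proof.
move=> E.
have := congr1 (fun M : 'M[C]_2 => M 0 0) E.
have := congr1 (fun M : 'M[C]_2 => M 0 1) E.
have := congr1 (fun M : 'M[C]_2 => M 1 0) E.
have := congr1 (fun M : 'M[C]_2 => M 1 1) E.
by rewrite !mxE /=.
Qed.

Lemma mx2_1 : (1%:M : 'M[C]_2) = mx2 1 0 0 1.
Proof.
apply/matrixP => i j; rewrite !mxE.
by case: i => [[|[|i]] Hi]; case: j => [[|[|j]] Hj].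
Qed.

Lemma mx2_opp (a b c d : C) : - mx2 a b c d = mx2 (-a) (-b) (-c) (-d).
Proof.
apply/matrixP => i j; rewrite !mxE.
by case: i => [[|[|i]] Hi]; case: j => [[|[|j]] Hj].
Qed.

Lemma mx2_scal (a : C) : (a%:M : 'M[C]_2) = mx2 a 0 0 a.
Proof.
apply/matrixP => i j; rewrite !mxE.
by case: i => [[|[|i]] Hi]; case: j => [[|[|j]] Hj].
Qed.

Lemma mx2_0 : (0 : 'M[C]_2) = mx2 0 0 0 0.
Proof.
apply/matrixP => i j; rewrite !mxE.
by case: i => [[|[|i]] Hi]; case: j => [[|[|j]] Hj].
Qed.

Lemma mx2_det_neq0 (a b c d : C) : mx2 a b c d \in unitmx -> a * d - b * c != 0.
Proof.
move=> U; apply/negP => /eqP D.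
have N0 : mx2 a b c d *m mx2 d (-b) (-c) a = 0.
  rewrite mx2_mul mx2_0; congr mx2; [rewrite -D; ring | ring | ring | rewrite -D; ring].
have : mx2 d (-b) (-c) a = 0.
  by rewrite -[mx2 d _ _ _]mul1mx -(mulVmx U) -mulmxA N0 mulmx0.
rewrite mx2_0 => /mx2_inj [d0 b0 c0 a0].
move: U; rewrite unitmxE.
have -> : mx2 a b c d = 0.
  rewrite mx2_0; congr mx2 => //.
  by rewrite -[b]opprK b0 oppr0.
  by rewrite -[c]opprK c0 oppr0.
by rewrite det0 unitr0.
Qed.

Definition mx3 (a b c d e f g h k : C) : 'M[C]_3 :=
  \matrix_(i < 3, j < 3) nth 0 (nth [::] [:: [:: a; b; c]; [:: d; e; f]; [:: g; h; k]] i) j.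

Ltac blk := repeat (rewrite ?mxE /=; try (rewrite /split; case: ltnP => //= ?)).

Lemma dsumR_mx3 (a b c d : C) : dsumR (mx2 a b c d) = mx3 a b 0 c d 0 0 0 1.
Proof.
apply/matrixP => i j; rewrite /dsumR /block_mx.
case: i => [[|[|[|i]]] Hi]; case: j => [[|[|[|j]]] Hj] //=.
all: blk.
all: try done.
Qed.

Lemma dsumL_mx3 (a b c d : C) : dsumL (mx2 a b c d) = mx3 1 0 0 0 a b 0 c d.
Proof.
apply/matrixP => i j; rewrite /dsumL /block_mx.
case: i => [[|[|[|i]]] Hi]; case: j => [[|[|[|j]]] Hj] //=.
all: blk.
all: try done.
Qed.

Lemma mx3_mul (a b c d e f g h k a' b' c' d' e' f' g' h' k' : C) :
  mx3 a b c d e f g h k *m mx3 a' b' c' d' e' f' g' h' k' =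
  mx3 (a*a'+b*d'+c*g') (a*b'+b*e'+c*h') (a*c'+b*f'+c*k')
      (d*a'+e*d'+f*g') (d*b'+e*e'+f*h') (d*c'+e*f'+f*k')
      (g*a'+h*d'+k*g') (g*b'+h*e'+k*h') (g*c'+h*f'+k*k').
Proof.
apply/matrixP => i j; rewrite !mxE !big_ord_recr big_ord0 /= !mxE /= add0r.
by case: i => [[|[|[|i]]] Hi]; case: j => [[|[|[|j]]] Hj].
Qed.

Lemma mx3_inj (a b c d e f g h k a' b' c' d' e' f' g' h' k' : C) :
  mx3 a b c d e f g h k = mx3 a' b' c' d' e' f' g' h' k' ->
  [/\ [/\ a = a', b = b' & c = c'], [/\ d = d', e = e' & f = f'] &
      [/\ g = g', h = h' & k = k']].
Proof.
move=> E.
have F : forall i j, (mx3 a b c d e f g h k) i j = (mx3 a' b' c' d' e' f' g' h' k') i j by rewrite E.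
have := F 0 0; have := F 0 1; have := F 0 2%:R; have := F 1 0; have := F 1 1;
have := F 1 2%:R; have := F 2%:R 0; have := F 2%:R 1; have := F 2%:R 2%:R.
by rewrite !mxE /=.
Qed.

Lemma dsumR_mul (A B : 'M[C]_2) : dsumR A *m dsumR B = dsumR (A *m B).
Proof.
rewrite /dsumR; etransitivity; first exact: (@mulmx_block _ 2 1 2 1 2 1).
by rewrite !mulmx0 !mul0mx !addr0 add0r mul1mx.
Qed.

Lemma dsumL_mul (A B : 'M[C]_2) : dsumL A *m dsumL B = dsumL (A *m B).
Proof.
rewrite /dsumL; etransitivity; first exact: (@mulmx_block _ 1 2 1 2 1 2).
by rewrite !mulmx0 !mul0mx !addr0 add0r mul1mx.
Qed.

Lemma dsumR1 : dsumR (1%:M : 'M[C]_2) = 1%:M.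
Proof. by rewrite /dsumR [RHS](scalar_mx_block 2 1). Qed.

Lemma dsumL1 : dsumL (1%:M : 'M[C]_2) = 1%:M.
Proof. by rewrite /dsumL [RHS](scalar_mx_block 1 2). Qed.

Lemma dsumR_inj (A B : 'M[C]_2) : dsumR A = dsumR B -> A = B.
Proof. by move=> E; case: (@eq_block_mx _ 2 1 2 1 _ _ _ _ _ _ _ _ E). Qed.

Lemma dsumR_unit (A : 'M[C]_2) : A \in unitmx -> dsumR A \in unitmx.
Proof.
move=> U.
have E : dsumR A *m dsumR (invmx A) = 1%:M by rewrite dsumR_mul mulmxV // dsumR1.
by case: (mulmx1_unit E).
Qed.

Lemma invmx_dsumR (A : 'M[C]_2) : A \in unitmx -> invmx (dsumR A) = dsumR (invmx A).
Proof.
move=> U.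
rewrite -[invmx (dsumR A)]mulmx1 -dsumR1 -(mulmxV U) -dsumR_mul mulmxA mulVmx ?mul1mx //.
exact: dsumR_unit.
Qed.

Lemma inv_uniq3 (A B : 'M[C]_3) : A *m B = 1%:M -> B = invmx A.
Proof.
move=> E.
have U : A \in unitmx by case/mulmx1_unit: E.
by rewrite -[B]mul1mx -(mulVmx U) -mulmxA E mulmx1.
Qed.

Ltac simp := rewrite ?mulr0 ?mul0r ?mulr1 ?mul1r ?addr0 ?add0r.

Lemma dbl_eq0 (x : C) : x + x = 0 -> x = 0.
Proof. by move/eqP; rewrite -mulr2n Num.Theory.mulrn_eq0 /= => /eqP. Qed.

Lemma sq_eq0 (x : C) : x * x = 0 -> x = 0.
Proof. by move/eqP; rewrite mulf_eq0 orbb => /eqP. Qed.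

Lemma core (eta : stvb_gen -> 'M[C]_3) S Rm T G :
  local_rep_with eta S Rm T G G ->
  [/\ forall g, eta g = eta_of S Rm T G g,
      S \in unitmx, Rm *m Rm = 1%:M &
      [/\ Rm *m S *m Rm = S, Rm *m T *m Rm = T, S *m T = T *m S &
       (G = mx2 1 0 0 1 \/ [/\ G = diag2 (-1) 1, Rm 0 0 = 0 & Rm 1 1 = 0])]].
Proof.
case=> [[[E1 E2 E3 E4 E5] [F1 F2 F3 F4 F5]] [US UR UG _] Hs Hr [Ht Hg1 Hg2]].
have Hsi : eta sig1inv = dsumR (invmx S).
  by rewrite (inv_uniq3 E1) Hs invmx_dsumR.
have RR : Rm *m Rm = 1%:M.
  by apply: dsumR_inj; rewrite -dsumR_mul -Hr E3 dsumR1.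
have GG : G *m G = 1%:M.
  by apply: dsumR_inj; rewrite -dsumR_mul -Hg1 E4 dsumR1.
have [G01 G10 G11 Y1 Y5] : [/\ G 0 1 = 0, G 1 0 = 0, G 1 1 = 1,
   Rm 0 0 * G 0 0 + Rm 0 1 * G 1 0 = Rm 0 0 &
   Rm 1 0 * G 0 1 + Rm 1 1 * G 1 1 = G 0 0 * Rm 1 1].
  move: (F1) (F2); rewrite Hg1 Hg2 Hr (mx2E G) (mx2E Rm).
  rewrite !dsumR_mx3 !dsumL_mx3 !mx3_mul; simp.
  move=> /mx3_inj [[X1 X2 X3] [X4 X5 X6] [X7 X8 X9]].
  move=> /mx3_inj [[Y1 Y2 Y3] [Y4 Y5 Y6] [Y7 Y8 Y9]].
  rewrite !mxE /=.
  split => //.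
  exact: sq_eq0 (esym X7).
have Gd : G = mx2 (G 0 0) 0 0 1 by rewrite {1}(mx2E G) G01 G10 G11.
have Gp : G 0 0 = 1 \/ G 0 0 = -1.
  move: GG; rewrite Gd mx2_mul mx2_1 => /mx2_inj [P _ _ _].
  have : G 0 0 ^+ 2 == 1 by rewrite expr2 -P; simp.
  by rewrite sqrf_eq1 !mxE /= => /orP [/eqP ->|/eqP ->]; [left|right].
have [E Gc EE] : exists2 E : 'M[C]_2, eta gam2 *m eta gam1 = dsumR E /\
    eta gam1 *m eta gam2 = dsumR E & (E *m E = 1%:M /\ forall M, E *m M = M *m E).
  case: Gp => Gp; [exists 1%:M | exists (-1%:M)].
  - rewrite Hg1 Hg2 Gd Gp mx2_1 !dsumR_mx3 !dsumL_mx3 !mx3_mul; simp; done.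
  - by split => [|M]; rewrite ?mul1mx ?mulmx1.
  - rewrite Hg1 Hg2 Gd Gp mx2_1 mx2_opp !dsumR_mx3 !dsumL_mx3 !mx3_mul; simp.
    by rewrite !oppr0.
  - by split => [|M]; rewrite ?mulNmx ?mulmxN ?opprK ?mul1mx ?mulmx1.
case: Gc => Gc1 Gc2.
have conj : forall M, eta gam2 *m eta gam1 *m dsumR M *m eta gam1 *m eta gam2 = dsumR M.
  move=> M; rewrite Gc1 -[_ *m eta gam1 *m eta gam2]mulmxA Gc2 !dsumR_mul; case: EE => EE1 EE2.
  by rewrite EE2 -mulmxA EE1 mulmx1.
split.
- by case; rewrite /eta_of ?Hs ?Hsi ?Hr ?Ht ?Hg1 ?Hg2.
- done.
- done.
split.
- by apply: dsumR_inj; rewrite -!dsumR_mul -Hs -Hr F3 Hs conj.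
- by apply: dsumR_inj; rewrite -!dsumR_mul -Ht -Hr F5 Ht conj.
- by apply: dsumR_inj; rewrite -!dsumR_mul -Hs -Ht F4.
case: Gp => Gp; [left | right].
  by rewrite Gd Gp.
split.
- by rewrite Gd Gp.
- move: Y1; rewrite G10 Gp mulr0 addr0 mulrN1 => Y1.
  by apply: dbl_eq0; rewrite -{1}Y1 addNr.
- move: Y5; rewrite G01 G11 Gp mulr0 add0r mulr1 mulN1r => Y5.
  by apply: dbl_eq0; rewrite {2}Y5 subrr.
Qed.


Lemma comm2 (u v w t a b c d : C) :
  mx2 u v w t *m mx2 a b c d = mx2 a b c d *m mx2 u v w t ->
  [/\ v*c = b*w, u*b + v*d = a*v + b*t, w*a + t*c = c*u + d*w & w*b = c*v].
Proof.
rewrite !mx2_mul => /mx2_inj [e1 e2 e3 e4]; split => //.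
  by move: e1; rewrite [a*u]mulrC => /addrI.
by move: e4; rewrite [d*t]mulrC => /addIr.
Qed.

Lemma sq2 (u v w t : C) : mx2 u v w t *m mx2 u v w t = 1%:M ->
  [/\ u*u + v*w = 1, v*(u+t) = 0, w*(u+t) = 0 & w*v + t*t = 1].
Proof.
rewrite mx2_mul mx2_1 => /mx2_inj [e1 e2 e3 e4]; split => //.
  by rewrite mulrDr [v*u]mulrC.
by rewrite mulrDr [w*t]mulrC.
Qed.

Lemma req (S Rm T G S' R' T' G' : 'M[C]_2) : S = S' -> Rm = R' -> T = T' -> G = G' ->
  rep_equiv (eta_of S Rm T G) (eta_of S' R' T' G').
Proof.
move=> -> -> -> ->; exists 1%:M; split; first exact: unitmx1.
by move=> g; rewrite invmx1 mul1mx mulmx1.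
Qed.

Lemma inv_uniq2 (A B : 'M[C]_2) : A *m B = 1%:M -> B = invmx A.
Proof.
move=> E.
have U : A \in unitmx by case/mulmx1_unit: E.
by rewrite -[B]mul1mx -(mulVmx U) -mulmxA E mulmx1.
Qed.

Lemma rconj (Q Qi S Rm T S' R' T' : 'M[C]_2) :
  Q *m Qi = 1%:M -> Qi *m Q = 1%:M -> S' \in unitmx ->
  S = Q *m S' *m Qi -> Rm = Q *m R' *m Qi -> T = Q *m T' *m Qi ->
  rep_equiv (eta_of S Rm T (I2 R)) (eta_of S' R' T' (I2 R)).
Proof.
move=> QQ QQ' US -> -> ->.
have UQ : Q \in unitmx by case/mulmx1_unit: QQ.
have eQ : Qi = invmx Q by apply: inv_uniq2.
exists (dsumR Q); split; first exact: dsumR_unit.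
rewrite invmx_dsumR // -eQ.
case => /=; rewrite ?dsumR_mul //.
- congr dsumR; symmetry; apply: inv_uniq2.
  rewrite -!mulmxA (mulmxA Qi) QQ' mul1mx (mulmxA S') mulmxV // mul1mx.
  done.
- by rewrite /I2 mulmx1 QQ.
- by rewrite /I2 dsumL1 mulmx1 dsumR_mul QQ dsumR1.
Qed.


Lemma neq0_1 (v w : C) : v * w = 1 -> v != 0.
Proof. by move=> E; apply/eqP => v0; move: E; rewrite v0 mul0r => /eqP; rewrite eq_sym oner_eq0. Qed.

Lemma lin1 (x y p q : C) : x != 0 -> p + x * y = q -> y = (q - p) / x.
Proof. by move=> xn0 <-; field. Qed.

Lemma lin0 (x y q : C) : x != 0 -> x * y = q -> y = q / x.
Proof. by move=> xn0 <-; field. Qed.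

Lemma mul_eq0r (x y : C) : x != 0 -> y * x = 0 -> y = 0.
Proof. by move=> xn0 /eqP; rewrite mulf_eq0 (negPf xn0) orbF => /eqP. Qed.

Lemma sq1 (x : C) : x * x = 1 -> x = 1 \/ x = -1.
Proof.
move=> E; have : x ^+ 2 == 1 by rewrite expr2 E.
by rewrite sqrf_eq1 => /orP [/eqP|/eqP]; [left|right].
Qed.

Lemma self_opp (x : C) : x = - x -> x = 0.
Proof. by move=> E; apply: dbl_eq0; rewrite {2}E subrr. Qed.

Lemma Rscal (a b c d f g h k : C) :
  a*d - b*c != 0 ->
  [/\ b*h = g*c, a*g + b*k = f*b + g*d, c*f + d*h = h*a + k*c & c*g = h*b] ->
  [\/ [/\ b != 0, h = g * c / b & k = (f*b + g*d - a*g) / b],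
      [/\ b = 0, c = 0, d = a & a != 0],
      [/\ b = 0, c != 0, a * d != 0, g = 0 & k = (c*f + d*h - h*a)/c] |
      [/\ b = 0, c = 0, a * d != 0, a != d & g = 0 /\ h = 0]].
Proof.
move=> det [st1 st2 st3 st4].
have [b0|bn0] := eqVneq b 0; last first.
  by constructor 1; split => //; [apply: lin0 | apply: lin1].
subst b.
have ad : a * d != 0 by move: det; rewrite mul0r subr0.
have [c0|cn0] := eqVneq c 0; last first.
  constructor 3; split => //.
    by apply: (mul_eq0r cn0); rewrite -st1 mul0r.
  by apply: lin1 => //; rewrite st3 [k*c]mulrC.
subst c.
have [ead|nad] := eqVneq d a.
  constructor 2; split => //.
  by move: ad; rewrite ead mulf_eq0 orbb.
have adn : a - d != 0 by rewrite subr_eq0 eq_sym.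
constructor 4; split => //.
split.
  apply: (mul_eq0r adn); rewrite mulrBr [g*a]mulrC; apply/eqP; rewrite subr_eq0; apply/eqP.
  by move: st2; simp.
apply: (mul_eq0r adn); rewrite mulrBr [h*d]mulrC; apply/eqP; rewrite subr_eq0; apply/eqP.
by move: st3; simp.
Qed.

Lemma mx2_unit (a b c d : C) : a * d - b * c != 0 -> mx2 a b c d \in unitmx.
Proof.
move=> D.
have E : mx2 a b c d *m mx2 (d / (a*d - b*c)) (- b / (a*d - b*c))
             (- c / (a*d - b*c)) (a / (a*d - b*c)) = 1%:M.
  by rewrite mx2_mul mx2_1; congr mx2; field.
by case: (mulmx1_unit E).
Qed.

Lemma classify (a b c d u v w t f g h k : C) G :
  a*d - b*c != 0 ->
  [/\ u*u + v*w = 1, v*(u+t) = 0, w*(u+t) = 0 & w*v + t*t = 1] ->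
  [/\ v*c = b*w, u*b + v*d = a*v + b*t, w*a + t*c = c*u + d*w & w*b = c*v] ->
  [/\ v*h = g*w, u*g + v*k = f*v + g*t, w*f + t*h = h*u + k*w & w*g = h*v] ->
  [/\ b*h = g*c, a*g + b*k = f*b + g*d, c*f + d*h = h*a + k*c & c*g = h*b] ->
  (G = mx2 1 0 0 1 \/ [/\ G = diag2 (-1) 1, u = 0 & t = 0]) ->
  thirteen_families (eta_of (mx2 a b c d) (mx2 u v w t) (mx2 f g h k) G).
Proof.
move=> det [r1 r2 r3 r4] [s1 s2 s3 s4] [t1 t2 t3 t4] [st1 st2 st3 st4].
case=> [HG | [HG u0 t0]]; subst G.
  have HI : mx2 1 0 0 1 = I2 R by rewrite /I2 mx2_1.
  have [v0|vn0] := eqVneq v 0; last first.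
    have ut : u + t = 0 by move/eqP: r2; rewrite mulf_eq0 (negPf vn0) /= => /eqP.
    have et : t = - u by apply/eqP; rewrite -subr_eq0 opprK addrC ut.
    subst t.
    have ew := lin1 vn0 r1. subst w.
    have ec := lin0 vn0 s1. subst c.
    have ed := lin1 vn0 s2. subst d.
    have eh := lin0 vn0 t1. subst h.
    have ek := lin1 vn0 t2. subst k.
    right; left; exists a, b, f, g, v, (-u); split => //.
      set D := (X in X != 0).
      have -> : D = v ^+ 2 * (a * ((a * v + b * - u - u * b) / v) -
               b * (b * ((1 - u * u) / v) / v)) by rewrite /D; field.
      by rewrite mulf_neq0 // expf_neq0.
    by apply: req; rewrite -?HI => //; congr mx2; field.
  subst v.
  have uu : u * u = 1 by move: r1; simp.
  have tt : t * t = 1 by move: r4; simp.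
  have [w0|wn0] := eqVneq w 0; last first.
    have ut : u + t = 0 by move/eqP: r3; rewrite mulf_eq0 (negPf wn0) /= => /eqP.
    have et : t = - u by apply/eqP; rewrite -subr_eq0 opprK addrC ut.
    subst t.
    have b0 : b = 0 by apply: (mul_eq0r wn0); rewrite -s1 mul0r.
    have g0 : g = 0 by apply: (mul_eq0r wn0); rewrite -t1 mul0r.
    subst b g.
    have ed : d = (w * a + - u * c - c * u) / w by apply: lin1 => //; rewrite s3 [d*w]mulrC.
    have ek : k = (w * f + - u * h - h * u) / w by apply: lin1 => //; rewrite t3 [k*w]mulrC.
    subst d k.
    have ad : a * ((w * a + - u * c - c * u) / w) != 0 by move: det; rewrite mul0r subr0.
    case: (sq1 uu) => eu; subst u.
    +
      do 6 right; left; exists a, c, f, h, w; split => //.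
        have -> : a * (-2 * c + a * w) = w * (a * ((w * a + - 1 * c - c * 1) / w)) by field.
        by rewrite mulf_neq0.
      by apply: req; rewrite -?HI => //; congr mx2; field.
    +
      do 7 right; left; exists a, c, f, h, w; split => //.
        have -> : a * (2 * c + a * w) = w * (a * ((w * a + - (-1) * c - c * (-1)) / w)) by field.
        by rewrite mulf_neq0.
      by apply: req; rewrite -?HI => //; congr mx2; field.
  subst w.
  have hR := Rscal det (And4 st1 st2 st3 st4).
  case: (sq1 uu) => eu; case: (sq1 tt) => et; subst u t.
  -
    have RI : mx2 1 0 0 1 = I2 R by [].
    case: hR => [[bn0 eh ek]|[b0 c0 ed an0]|[b0 cn0 ad g0 ek]|[b0 c0 ad nad [g0 h0]]];
      subst; rewrite ?RI.
    + do 3 right; left; exists a, b, c, d, f, g; split => //.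
      by apply: req; rewrite -?HI => //; congr mx2; field.
    + do 8 right; left; exists a, f, g, h, k; split => //.
      by apply: req; rewrite -?HI ?mx2_scal.
    + do 9 right; left; exists a, c, d, f, h; split => //.
      by apply: req; rewrite -?HI => //; congr mx2; field.
    + do 12 right; exists a, d, f, k; split => //.
      by apply: req; rewrite -?HI.
  -
    have b0 : b = 0 by apply: self_opp; move: s2; simp; rewrite mulrN1.
    have c0 : c = 0 by apply: self_opp; move: s3; simp; rewrite mulN1r => E; exact: esym E.
    have g0 : g = 0 by apply: self_opp; move: t2; simp; rewrite mulrN1.
    have h0 : h = 0 by apply: self_opp; move: t3; simp; rewrite mulN1r => E; exact: esym E.
    subst b c g h.
    do 10 right; left; exists a, d, f, k; split.
      by move: det; rewrite mul0r subr0.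
    by apply: req; rewrite -?HI.
  -
    have b0 : b = 0 by apply: self_opp; move: s2; simp; rewrite mulN1r => E; exact: esym E.
    have c0 : c = 0 by apply: self_opp; move: s3; simp; rewrite mulrN1.
    have g0 : g = 0 by apply: self_opp; move: t2; simp; rewrite mulN1r => E; exact: esym E.
    have h0 : h = 0 by apply: self_opp; move: t3; simp; rewrite mulrN1.
    subst b c g h.
    do 11 right; left; exists a, d, f, k; split.
      by move: det; rewrite mul0r subr0.
    by apply: req; rewrite -?HI.
  -
    have RI : mx2 (-1) 0 0 (-1) = - I2 R by rewrite /I2 mx2_1 mx2_opp oppr0.
    case: hR => [[bn0 eh ek]|[b0 c0 ed an0]|[b0 cn0 ad g0 ek]|[b0 c0 ad nad [g0 h0]]];
      subst; rewrite ?RI.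
    + do 2 right; left; exists a, b, c, d, f, g; split => //.
      by apply: req; rewrite -?HI => //; congr mx2; field.
    + do 4 right; left; exists a, f, g, h, k; split => //.
      by apply: req; rewrite -?HI ?mx2_scal.
    + do 5 right; left; exists a, c, d, f, h; split => //.
      by apply: req; rewrite -?HI => //; congr mx2; field.
    + do 2 right; left; exists a, (a - d), 0, d, f, (f - k); split.
      * by rewrite mulr0 subr0.
      * by rewrite subr_eq0.
      have adn : a - d != 0 by rewrite subr_eq0.
      rewrite HI; apply: (@rconj (mx2 1 1 0 1) (mx2 1 (-1) 0 1)).
      * by rewrite mx2_mul mx2_1; congr mx2; ring.
      * by rewrite mx2_mul mx2_1; congr mx2; ring.
      * by apply: mx2_unit; rewrite mulr0 subr0.
      * by rewrite !mx2_mul; congr mx2; ring.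
      * by rewrite /I2 mx2_1 mx2_opp !mx2_mul; congr mx2; ring.
      * by rewrite !mx2_mul; congr mx2; field.
subst u t.
have vw : v * w = 1 by move: r1; simp.
have vn0 := neq0_1 vw.
have ew : w = 1 / v by apply: (mulfI vn0); rewrite vw; field.
subst w.
have ec : c = b / v^+2 by apply: (mulfI vn0); rewrite s1; field.
have ed : d = a by apply: (mulfI vn0); move: s2; simp => ->; rewrite mulrC.
have eh : h = g / v^+2 by apply: (mulfI vn0); rewrite t1; field.
have ek : k = f by apply: (mulfI vn0); move: t2; simp => ->; rewrite mulrC.
subst c d h k.
left; exists a, b, f, g, v; split => //.
  have -> : a ^+ 2 * v ^+ 2 - b ^+ 2 = v ^+ 2 * (a * a - b * (b / v ^+ 2)) by field.
  by rewrite mulf_neq0 // expf_neq0.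
by apply: req.
Qed.


Lemma comm_inv3 (A B : 'M[C]_3) : B \in unitmx -> A *m B = B *m A ->
  A *m invmx B = invmx B *m A.
Proof.
move=> U E.
rewrite -[A *m invmx B]mul1mx -(mulVmx U) -!mulmxA (mulmxA B A) -E.
by rewrite -!mulmxA mulmxV // mulmx1.
Qed.

Lemma taubar_rel (p a b t : 'M[C]_3) : p *m p = 1%:M -> a *m a = 1%:M ->
  b *m b = 1%:M -> a *m b = b *m a -> t \in unitmx ->
  p *m t *m p = b *m a *m t *m a *m b ->
  p *m invmx t *m p = b *m a *m invmx t *m a *m b.
Proof.
move=> pp aa bb ab U E.
have ba1 : a *m b *m (b *m a) = 1%:M by rewrite -mulmxA (mulmxA b b a) bb mul1mx aa.
have ab1 : b *m a *m (a *m b) = 1%:M by rewrite -mulmxA (mulmxA a a b) aa mul1mx bb.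
have e1 : (p *m t *m p) *m (p *m invmx t *m p) = 1%:M.
  by rewrite -!mulmxA (mulmxA p p) pp mul1mx (mulmxA t) mulmxV // mul1mx.
have e2 : (p *m t *m p) *m (b *m a *m invmx t *m a *m b) = 1%:M.
  rewrite E.
  have -> : b *m a *m t *m a *m b = (b *m a) *m t *m (a *m b) by rewrite !mulmxA.
  have -> : b *m a *m invmx t *m a *m b = (b *m a) *m invmx t *m (a *m b) by rewrite !mulmxA.
  move: ba1 ab1; move: (b *m a) (a *m b) => X Y YX XY.
  by rewrite -!mulmxA (mulmxA Y) YX mul1mx (mulmxA t) mulmxV // mul1mx.
by rewrite (inv_uniq3 e1) (inv_uniq3 e2).
Qed.

End H.

From Stdlib Require Import FunctionalExtensionality.
Set Strict Implicit. Unset Implicit Arguments.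

Theorem theorem4p1 (R : realType) (eta : stvb_gen -> 'M[R[i]]_3) :
  homogeneous_local_rep eta ->
  thirteen_families eta /\
  (eta tau1 \in unitmx -> stvg_rep (extend_to_stvg eta)).
Proof.
move=> [S [Rm [T [G H]]]].
split.
  have [Heta US RR [RSR RTR ST HG]] := core H.
  have -> : eta = eta_of S Rm T G by apply: functional_extensionality.
  have RS : Rm *m S = S *m Rm.
    by rewrite -{2}RSR -mulmxA RR mulmx1.
  have RT : Rm *m T = T *m Rm.
    by rewrite -{2}RTR -mulmxA RR mulmx1.
  rewrite (mx2E S) (mx2E Rm) (mx2E T).
  apply: classify.
  - by apply: mx2_det_neq0; rewrite -mx2E.
  - by apply: sq2; rewrite -mx2E.
  - by apply: comm2; rewrite -!mx2E.
  - by apply: comm2; rewrite -!mx2E.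
  - by apply: comm2; rewrite -!mx2E.
  - done.
case: H => [[[E1 E2 E3 E4 E5] [F1 F2 F3 F4 F5]] _ _ _ _] Ut.
split.
- case => /=.
  + by case: (mulmx1_unit E1).
  + by case: (mulmx1_unit E3).
  + done.
  + by rewrite unitmx_inv.
  + by case: (mulmx1_unit E4).
  + by case: (mulmx1_unit E5).
- by split.
- done.
- split => //=.
  + exact: comm_inv3.
  + exact: taubar_rel.
- by rewrite /= mulmxV // mulVmx.
Qed.
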